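(* Let $(E,\mathcal{E},\nu)$ be a $\sigma$-finite measure space in which every singleton set is measurable with positive measure, $\phi$ a Young function satisfying the $\Delta_2$-condition, $w$ a weight function, and $\Psi:E\to E$ a non-singular measurable transformation such that the composition operator $C_\Psi f=f\circ\Psi$ is a bounded linear operator on the Orlicz-Lorentz space $L_{(\phi,w)}$. Let $m\ge0$ be an integer. If the map $\Psi|_{\Psi^m(E)}:\Psi^m(E)\to\Psi^m(E)$ is not injective, then $\mathcal{D}(C_\Psi)>m$.
   Context: A Young function is a convex $\phi:[0,\infty)\to[0,\infty)$ with $\phi(x)=0\iff x=0$ and $\lim_{x\to\infty}\phi(x)=\infty$; $\Delta_2$-condition: $\phi(2x)\le k\phi(x)$ for some $k>0$ and all $x>0$. A weight function is a non-increasing locally integrable $w:(0,\infty)\to(0,\infty)$ with $\int_0^\infty w=\infty$. For measurable $f$, $\nu_f(s)=\nu\{|f|>s\}$, $f^*(t)=\inf\{s>0:\nu_f(s)\le t\}$; $L_{(\phi,w)}$ is the space of measurable $f:E\to\mathbb{C}$ with $\int_0^\infty\phi(\alpha f^*(t))w(t)\,dt<\infty$ for some $\alpha>0$, with the Luxemburg norm. $\Psi$ non-singular: $\nu(\Psi^{-1}(S))=0$ whenever $\nu(S)=0$; $\Psi^0=\mathrm{id}$. The descent $\mathcal{D}(T)$ is the smallest integer $m$ with $\mathcal{R}(T^{m+1})=\mathcal{R}(T^m)$ ($\mathcal{R}$ = range), and $\infty$ if no such $m$ exists. *)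

(* Defs.v *)
From HB Require Import structures.
From mathcomp Require Import all_boot all_order all_algebra.
From mathcomp Require Import all_classical all_reals all_analysis.
From mathcomp Require complex.

Set Implicit Arguments.
Unset Strict Implicit.
Unset Printing Implicit Defensive.

Import Order.TTheory GRing.Theory Num.Theory.
Local Open Scope classical_set_scope.
Local Open Scope ring_scope.

Section OrliczLorentz.
Variable R : realType.

Definition C := complex.complex R.
Definition cabs (z : C) : R :=
  Num.sqrt (complex.Re z ^+ 2 + complex.Im z ^+ 2).
Definition cscale (a : R) (z : C) : C :=
  complex.Complex (a * complex.Re z) (a * complex.Im z).

(* Young function  phi : [0,oo) -> [0,oo)  (values on negatives irrelevant) *)
Definition young_function (phi : R -> R) : Prop :=
  [/\ (forall x, 0 <= x -> 0 <= phi x),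
      (forall x y t, 0 <= x -> 0 <= y -> 0 <= t -> t <= 1 ->
          phi (t * x + (1 - t) * y) <= t * phi x + (1 - t) * phi y),
      (forall x, 0 <= x -> (phi x = 0 <-> x = 0)) &
      (phi x @[x --> +oo] --> +oo)].

Definition delta2 (phi : R -> R) : Prop :=
  exists k : R, 0 < k /\ forall x, 0 < x -> phi (2 * x) <= k * phi x.

Definition weight_function (w : R -> R) : Prop :=
  [/\ (forall t, 0 < t -> 0 < w t),
      (forall s t, 0 < s -> s <= t -> w t <= w s),
      (forall t, 0 < t ->
         (\int[lebesgue_measure]_(x in `]0%R, t%R]) (w x)%:E < +oo)%E) &
      (\int[lebesgue_measure]_(x in `]0%R, +oo[) (w x)%:E = +oo)%E].

Context d (E : measurableType d) (nu : {measure set E -> \bar R}).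

(* measurability of a complex-valued function (Borel sigma-algebra of C = R^2) *)
Definition cmeasurable (f : E -> C) : Prop :=
  measurable_fun setT (fun x => complex.Re (f x)) /\
  measurable_fun setT (fun x => complex.Im (f x)).

Definition distrib (f : E -> C) (s : R) : \bar R :=
  nu [set x | s < cabs (f x)].

Definition rearr (f : E -> C) (t : R) : \bar R :=
  ereal_inf [set s%:E | s in [set s : R | 0 < s /\ (distrib f s <= t%:E)%E]].

Definition phiE (phi : R -> R) (x : \bar R) : \bar R :=
  match x with
  | r%:E => (phi r)%:E
  | _ => +oo%E
  end.

Definition modular (phi w : R -> R) (f : E -> C) : \bar R :=
  (\int[lebesgue_measure]_(t in `]0%R, +oo[) (phiE phi (rearr f t) * (w t)%:E))%E.

Definition OL (phi w : R -> R) : set (E -> C) :=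
  [set f | cmeasurable f /\
     exists alpha : R, 0 < alpha /\
       (modular phi w (fun x => cscale alpha (f x)) < +oo)%E].

Definition lux_norm (phi w : R -> R) (f : E -> C) : \bar R :=
  ereal_inf [set lam%:E | lam in [set lam : R | 0 < lam /\
     (modular phi w (fun x => cscale lam^-1 (f x)) <= 1)%E]].

Definition nonsingular (Psi : E -> E) : Prop :=
  forall S, measurable S -> nu S = 0%E -> nu (Psi @^-1` S) = 0%E.

Definition comp_op (Psi : E -> E) (f : E -> C) : E -> C := f \o Psi.

Definition bounded_comp_op (phi w : R -> R) (Psi : E -> E) : Prop :=
  (forall f, OL phi w f -> OL phi w (comp_op Psi f)) /\
  exists M : R, 0 <= M /\ forall f, OL phi w f ->
    (lux_norm phi w (comp_op Psi f) <= M%:E * lux_norm phi w f)%E.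

Definition range_pow (phi w : R -> R) (Psi : E -> E) (k : nat) : set (E -> C) :=
  [set iter k (comp_op Psi) f | f in OL phi w].

(* D(C_Psi) > m : no k <= m with R(T^{k+1}) = R(T^k) *)
Definition descent_gt (phi w : R -> R) (Psi : E -> E) (m : nat) : Prop :=
  ~ (exists k : nat, (k <= m)%N /\
       range_pow phi w Psi k.+1 = range_pow phi w Psi k).

End OrliczLorentz.

(* Main.v *)
Require Import Defs.
From HB Require Import structures.
From mathcomp Require Import all_boot all_order all_algebra.
From mathcomp Require Import all_classical all_reals all_analysis.
From mathcomp Require complex.
From mathcomp Require Import measurable_realfun unstable.

Import Order.TTheory GRing.Theory Num.Theory.
Local Open Scope classical_set_scope.
Local Open Scope ring_scope.

Lemma ge0_le_integral_nm d (T : measurableType d) (R : realType)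
  (mu : {measure set T -> \bar R}) (D : set T) (f g : T -> \bar R) :
  (forall x, D x -> (0 <= f x)%E) -> (forall x, D x -> (0 <= g x)%E) ->
  (forall x, D x -> (f x <= g x)%E) ->
  (\int[mu]_(x in D) f x <= \int[mu]_(x in D) g x)%E.
Proof.
move=> f0 g0 fg; rewrite !ge0_integralE//.
apply: ge_ereal_sup => _ [h /= hf <-]; apply: ereal_sup_ubound; exists h => //= x.
apply: le_trans (hf x) _; rewrite /patch; case: ifP => // /[1!inE] /fg //.
Qed.

Lemma indic_OL (R : realType) d (E : measurableType d)
  (nu : {measure set E -> \bar R}) (hsf : sigma_finite setT nu) (a : E)
  (ma : measurable [set a]) (nua : (0 < nu [set a])%E)
  (phi w : R -> R) (hphi : young_function phi) (hw : weight_function w) :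
  OL nu phi w (fun x => complex.Complex (\1_[set a] x : R) 0).
Proof.
split.
  split; [exact: measurable_indic | exact: measurable_cst].
case: hphi => phi0 phiconv phiz _.
case: hw => w0 _ wint _.
have phi00 : phi 0 = 0 by apply/(phiz 0).
have phi1 : 0 <= phi 1 := phi0 1 ler01.
set alpha := (1 + phi 1)^-1.
have alpha0 : 0 < alpha by rewrite invr_gt0; apply: ltr_pwDl.
have alpha1 : alpha <= 1 by rewrite invf_le1 ?lerDl // ltr_pwDl.
have aphi : alpha * phi 1 <= 1.
  by rewrite mulrC ler_pdivrMr ?mul1r ?lerDr // ltr_pwDl.
exists alpha; split => //; rewrite /modular.
set g := (fun x => Defs.cscale alpha (complex.Complex (\1_[set a] x : R) 0)).
have cabsg x : cabs (g x) = alpha * \1_[set a] x.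
  rewrite /cabs /g /Defs.cscale /= mulr0 expr0n /= addr0 sqrtr_sqr ger0_norm //.
  by rewrite mulr_ge0 // ?ltW // indicE.
have nufin : (nu [set a] < +oo)%E.
  case: hsf => F FT HF.
  have : (setT : set E) a by [].
  rewrite FT => -[i _ Fia].
  apply: le_lt_trans (HF i).2; apply: le_measure; rewrite ?inE //; first exact: (HF i).1.
  by move=> x ->.
set c := fine (nu [set a]).
have cE : nu [set a] = c%:E by rewrite fineK // ge0_fin_numE // ltW.
have c0 : 0 < c by rewrite -lte_fin -cE.
have hdist s : 0 <= s -> distrib nu g s = if s < alpha then c%:E else 0%E.
  move=> s0; rewrite /distrib.
  have -> : [set x | s < cabs (g x)] = if s < alpha then [set a] else set0.
    apply/seteqP; split => x /=; rewrite cabsg indicE.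
      case: (pselect (x = a)) => [->|nxa]; first by rewrite mem_set // mulr1 => ->.
      by rewrite memNset // mulr0 => /(le_lt_trans s0); rewrite ltxx.
    case: ifP => [sa ->|_ //]; by rewrite mem_set // mulr1.
  by case: ifP => _; rewrite ?cE ?measure0.
have r0 t : (0 <= rearr nu g t)%E.
  by apply: le_ereal_inf_tmp => _ [s [s0 _] <-]; rewrite lee_fin ltW.
have r1 t : 0 < t -> (rearr nu g t <= alpha%:E)%E.
  move=> t0; apply: ge_ereal_inf; exists alpha%:E => //; exists alpha => //; split => //.
  by rewrite hdist ?ltxx ?lee_fin; [exact: ltW | exact: ltW].
have rc t : c <= t -> (rearr nu g t <= 0%E)%E.
  move=> ct.
  have rfin : rearr nu g t = (fine (rearr nu g t))%:E.
    have t0 : 0 < t by apply: lt_le_trans ct.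
    by rewrite fineK // ge0_fin_numE // (le_lt_trans (r1 t t0)) // ltry.
  rewrite rfin lee_fin; apply/ler_gtP => s s0.
  rewrite -lee_fin -rfin; apply: ge_ereal_inf; exists s%:E => //; exists s => //; split => //.
  rewrite hdist; last exact: ltW.
  by case: ifP => _; rewrite lee_fin // ltW // (lt_le_trans c0).
have phile r : 0 <= r -> r <= alpha -> phi r <= 1.
  move=> rr0 ra; have r1' : r <= 1 := le_trans ra alpha1.
  have := phiconv 1 0 r ler01 (lexx 0) rr0 r1'.
  rewrite mulr1 mulr0 addr0 phi00 mulr0 addr0 => /le_trans; apply.
  by apply: le_trans aphi; apply: ler_wpM2r.
apply: (@le_lt_trans _ _ (\int[lebesgue_measure]_(t in `]0%R, +oo[)
    (((fun t => (w t)%:E) \_ `]0%R, c]) t))%E).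
  have rE t : 0 < t -> exists2 r, rearr nu g t = r%:E & 0 <= r <= alpha.
    move=> t0; exists (fine (rearr nu g t)).
      by rewrite fineK // ge0_fin_numE // (le_lt_trans (r1 t t0)) // ltry.
    by rewrite -lee_fin -lee_fin fineK ?r0 ?r1 // ge0_fin_numE // (le_lt_trans (r1 t t0)) // ltry.
  have pg0 t : (0 <= ((fun t => (w t)%:E) \_ `]0%R, c]) t)%E.
    rewrite /patch; case: ifP => // /[1!inE]; rewrite /= in_itv /= => /andP[t0 _].
    by rewrite lee_fin ltW // w0.
  apply: ge0_le_integral_nm => t; rewrite /= in_itv /= andbT => t0;
    have [r rtE /andP[rr0 ra]] := rE t t0.
  - by rewrite rtE /= -EFinM lee_fin mulr_ge0 // ?phi0 // ltW // w0.
  - exact: pg0.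
  rewrite rtE; case: (leP t c) => tc.
    rewrite /patch mem_set; last by rewrite /= in_itv /= t0 tc.
    rewrite /= -EFinM lee_fin -[X in _ <= X]mul1r; apply: ler_wpM2r; first exact/ltW/w0.
    exact: phile.
  have : (r%:E <= 0%E)%E by rewrite -rtE; exact: rc (ltW tc).
  rewrite lee_fin => rle0; have -> : r = 0 by apply/eqP; rewrite eq_le rle0 rr0.
  by rewrite /= phi00 mul0e.
rewrite -integral_mkcondr setIidr; first exact: wint.
by move=> x /=; rewrite !in_itv /= => /andP[->].
Qed.

Lemma iter_cop d (E : measurableType d) (R : realType) (Psi : E -> E) n (g : E -> C R) x :
  iter n (comp_op Psi) g x = g (iter n Psi x).
Proof.
elim: n x => // n IH x; rewrite iterS /comp_op /= IH -iterSr //.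
Qed.

Theorem corollary4p4 (R : realType) (d : measure_display) (E : measurableType d)
  (nu : {measure set E -> \bar R})
  (hsf : sigma_finite setT nu)
  (hsing : forall x : E, measurable [set x] /\ (0 < nu [set x])%E)
  (phi w : R -> R) (hphi : young_function phi) (hd2 : delta2 phi)
  (hw : weight_function w)
  (Psi : E -> E) (hPsi_meas : measurable_fun setT Psi)
  (hPsi_ns : nonsingular nu Psi)
  (hbdd : bounded_comp_op nu phi w Psi)
  (m : nat)
  (hninj : ~ {in range (iter m Psi) &, injective Psi}) :
  descent_gt nu phi w Psi m.
Proof.
have [a [b [[a0 _ ha] [[b0 _ hb] [hab nab]]]]] :
    exists a b, range (iter m Psi) a /\ range (iter m Psi) b /\ Psi a = Psi b /\ a <> b.
  apply: contrapT => H; apply: hninj => x y; rewrite !inE => xr yr e.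
  apply: contrapT => nxy; apply: H; exists x, y; by [].
move=> [k [km heq]].
set f := fun x => complex.Complex (\1_[set a] x : R) 0.
have OLf : OL nu phi w f by apply: indic_OL => //; [exact: (hsing a).1 | exact: (hsing a).2].
have : range_pow nu phi w Psi k (iter k (comp_op Psi) f) by exists f.
rewrite -heq => -[h _ hE].
have key z : iter m Psi z = iter k Psi (iter (m - k) Psi z).
  by rewrite -iterD subnKC.
have := congr1 (fun F => F (iter (m - k) Psi a0)) hE.
have := congr1 (fun F => F (iter (m - k) Psi b0)) hE.
move=> e1 e2; rewrite !iter_cop in e1 e2.
rewrite !iterS -!key hb in e1; rewrite !iterS -!key ha in e2.
rewrite -hab e2 in e1.
move: e1 => /(congr1 (@complex.Re R)); rewrite /f /= !indicE mem_set // memNset //.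
  by move=> /eqP; rewrite eqr_nat.
by move=> /esym.
Qed.
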